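(* Let $k\ge 2$, $n\ge1$, and let $L_n$ and the bijection $\varphi:L_n\to E^{n-1}$ be as in the context. If $A\subseteq L_n$ is an intersecting antichain in $E^n$, then $\varphi(A)$ is an intersecting antichain in $E^{n-1}$; and if $B\subseteq E^{n-1}$ is an intersecting antichain, then $\varphi^{-1}(B)$ is an intersecting antichain in $E^n$.
   Context: $E=\{0,\dots,k-1\}$. For $\mathbf a,\mathbf b\in E^m$ write $\mathbf a\preceq\mathbf b$ if $a_i\le b_i$ for all $i$. $A\subseteq E^m$ is an antichain if there are no distinct $\mathbf a,\mathbf b\in A$ with $\mathbf a\preceq\mathbf b$; $A$ is intersecting if for all $\mathbf a,\mathbf b\in A$ (including $\mathbf a=\mathbf b$) there is $i$ with $a_i+b_i\ge k$. For $\mathbf a\in E^n$, $w(\mathbf a)=a_1+\dots+a_n$, and $\mathcal B_t=\{\mathbf a\in E^n: w(\mathbf a)=t\}$. Let $g=\lfloor n(k-1)/2\rfloor$ and $C_i=\{\mathbf a\in E^n: a_1=i\}$. Define $L_n=(\mathcal B_0\cup\dots\cup\mathcal B_g)\cap(C_0\cup C_{k-1})$ if $n(k-1)$ is odd, and $L_n=((\mathcal B_0\cup\dots\cup\mathcal B_{g-1})\cap(C_0\cup C_{k-1}))\cup(\mathcal B_g\cap C_0)$ if $n(k-1)$ is even. For $a\in E$ let $\overline a=k-1-a$. Define $\varphi(a_1,\dots,a_n)=(a_2,\dots,a_n)$ if $a_1=0$ and $\varphi(a_1,\dots,a_n)=(\overline{a}_2,\dots,\overline{a}_n)$ if $a_1=k-1$;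 this map is a bijection $L_n\to E^{n-1}$. *)

(* Defs.v *)
From mathcomp Require Import all_boot.
Set Implicit Arguments. Unset Strict Implicit. Unset Printing Implicit Defensive.

(* E = {0,...,k-1} is 'I_k ; E^n is {ffun 'I_n -> 'I_k}. *)
Definition vec (k n : nat) := {ffun 'I_n -> 'I_k}.

Definition vle k n (a b : vec k n) : bool := [forall i : 'I_n, a i <= b i].

Definition antichain k n (A : {set vec k n}) : Prop :=
  forall a b, a \in A -> b \in A -> a != b -> ~~ vle a b.

Definition intersecting k n (A : {set vec k n}) : Prop :=
  forall a b, a \in A -> b \in A -> exists i : 'I_n, k <= a i + b i.

Definition weight k n (a : vec k n) : nat := \sum_(i < n) (a i : nat).

Definition Bt k n (t : nat) : {set vec k n} := [set a : vec k n | weight a == t].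

Definition Ci k m (i : nat) : {set vec k m.+1} := [set a : vec k m.+1 | (a ord0 : nat) == i].

(* L_n for n = m.+1 *)
Definition Ln (k m : nat) : {set vec k m.+1} :=
  let n := m.+1 in
  let g := (n * (k - 1)) %/ 2 in
  if odd (n * (k - 1)) then
    (\bigcup_(t < g.+1) Bt k n t) :&: (Ci k m 0 :|: Ci k m (k - 1))
  else
    ((\bigcup_(t < g) Bt k n t) :&: (Ci k m 0 :|: Ci k m (k - 1)))
      :|: (Bt k n g :&: Ci k m 0).

(* complement abar = k-1-a : rev_ord has value k - a.+1 *)
Definition cbar k (a : 'I_k) : 'I_k := rev_ord a.

(* phi : E^(m+1) -> E^m ; (a_2..a_n) if a_1 = 0, (abar_2..abar_n) otherwise
   (on L_n the "otherwise" case is exactly a_1 = k-1) *)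
Definition phi k m (a : vec k m.+1) : vec k m :=
  if (a ord0 : nat) == 0 then [ffun i => a (lift ord0 i)]
  else [ffun i => cbar (a (lift ord0 i))].

(* Main.v *)
Require Import Defs.
From mathcomp Require Import all_boot.
From mathcomp Require Import zify.
Set Implicit Arguments. Unset Strict Implicit. Unset Printing Implicit Defensive.

Lemma wsplit k m (a : vec k m.+1) :
  weight a = a ord0 + \sum_(i < m) (a (lift ord0 i) : nat).
Proof. by rewrite /weight big_ord_recl. Qed.

Lemma Lnp k m (a : vec k m.+1) : 2 <= k -> a \in Ln k m ->
  [/\ (a ord0 = 0 :> nat) \/ (a ord0 = k - 1 :> nat),
      2 * weight a <= m.+1 * (k - 1) &
      ((a ord0 : nat) = k - 1 -> 2 * weight a < m.+1 * (k - 1))].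
Proof.
move=> hk; rewrite /Ln.
set N := m.+1 * (k - 1).
have dv := divn_eq N 2; rewrite modn2 in dv.
case: ifP => ho; rewrite ?inE.
- case/andP => /bigcupP [t _ ht] hc.
  rewrite /Bt inE in ht; move/eqP: ht => ht.
  have tl := ltn_ord t.
  case/orP: hc => /eqP hc; (split; [first [by left | by right] | lia | lia]).
- case/orP => [/andP [/bigcupP [t _ ht] hc] | /andP [/eqP ht /eqP hc]].
  + rewrite /Bt inE in ht; move/eqP: ht => ht.
    have tl := ltn_ord t.
    case/orP: hc => /eqP hc; (split; [first [by left | by right] | lia | lia]).
  + split; [by left | lia | lia].
Qed.

Lemma keyw k m (a b : vec k m.+1) : 2 <= k -> a \in Ln k m -> b \in Ln k m ->
  (a ord0 : nat) = k - 1 -> weight a + weight b < m.+1 * (k - 1).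
Proof.
move=> hk ha hb e.
have [_ w1 s1] := Lnp hk ha. have [_ w2 _] := Lnp hk hb.
have := s1 e. lia.
Qed.

Lemma sum_lb m (f g : 'I_m -> nat) c : (forall i, c <= f i + g i) ->
  m * c <= \sum_(i < m) f i + \sum_(i < m) g i.
Proof.
move=> H; rewrite -big_split /=.
have -> : m * c = \sum_(i < m) c by rewrite sum_nat_const card_ord.
by apply: leq_sum => i _; apply: H.
Qed.

Lemma phiE0 k m (a : vec k m.+1) i : (a ord0 : nat) = 0 ->
  (phi a i : nat) = a (lift ord0 i).
Proof. by move=> e; rewrite /phi e eqxx ffunE. Qed.

Lemma phiE1 k m (a : vec k m.+1) i : 2 <= k -> (a ord0 : nat) = k - 1 ->
  (phi a i : nat) = k - (a (lift ord0 i)).+1.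
Proof.
move=> hk e; rewrite /phi e.
have -> : (k - 1 == 0) = false by apply/eqP; lia.
by rewrite ffunE.
Qed.

Lemma vleP k n (a b : vec k n) : reflect (forall i, a i <= b i) (vle a b).
Proof. exact: forallP. Qed.

Lemma le0 k m (a b : vec k m.+1) : (a ord0 <= b ord0) ->
  (forall i, a (lift ord0 i) <= b (lift ord0 i)) -> vle a b.
Proof.
move=> h0 h; apply/vleP => j; case: (unliftP ord0 j) => [i ->|->] //.
Qed.

Lemma ext0 k m (a b : vec k m.+1) : (a ord0 : nat) = b ord0 ->
  (forall i, (a (lift ord0 i) : nat) = b (lift ord0 i)) -> a = b.
Proof.
move=> h0 h; apply/ffunP => j; apply: val_inj.
by case: (unliftP ord0 j) => [i ->|->]; [exact: h | exact: h0].
Qed.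

Lemma ord_cases m (j : 'I_m.+1) : j = ord0 \/ exists i : 'I_m, j = lift ord0 i.
Proof. by case: (unliftP ord0 j) => [i ->|->]; [right; exists i | left]. Qed.

Lemma intI k n (A : {set vec k n}) :
  (forall a b : vec k n, a \in A -> b \in A -> exists i : 'I_n, k <= (a i : nat) + b i) ->
  intersecting A.
Proof. by []. Qed.
Lemma intE k n (A : {set vec k n}) : intersecting A ->
  (forall a b : vec k n, a \in A -> b \in A -> exists i : 'I_n, k <= (a i : nat) + b i).
Proof. by []. Qed.
Lemma antI k n (A : {set vec k n}) :
  (forall a b : vec k n, a \in A -> b \in A -> a != b -> ~~ vle a b) -> antichain A.
Proof. by []. Qed.
Lemma antE k n (A : {set vec k n}) : antichain A ->
  (forall a b : vec k n, a \in A -> b \in A -> a != b -> ~~ vle a b).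
Proof. by []. Qed.
Lemma imE k m (A : {set vec k m.+1}) (x : vec k m) : x \in @phi k m @: A ->
  exists2 a : vec k m.+1, a \in A & x = phi a.
Proof. by move/imsetP. Qed.

Ltac rw ca cb hk :=
  repeat (first [ rewrite (phiE0 _ ca) | rewrite (phiE0 _ cb)
                | rewrite (phiE1 _ hk ca) | rewrite (phiE1 _ hk cb) ]).

Theorem lemma4 (k m : nat) (hk : 2 <= k) :
  (forall A : {set vec k m.+1},
      A \subset Ln k m -> intersecting A -> antichain A ->
      intersecting (@phi k m @: A) /\ antichain (@phi k m @: A)) /\
  (forall B : {set vec k m},
      intersecting B -> antichain B ->
      intersecting [set a in Ln k m | phi a \in B] /\
      antichain [set a in Ln k m | phi a \in B]).
Proof.
have bd : forall n (a : vec k n) i, (a i : nat) < k by move=> n a i; exact: ltn_ord.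
split.
- move=> A sub /intE iA /antE aA.
  have inL : forall a, a \in A -> a \in Ln k m by move=> a; apply: (subsetP sub).
  split.
  + apply: intI => x y /imE [a ha ->] /imE [b hb ->].
    have [ca wa sa] := Lnp hk (inL a ha).
    have [cb wb sb] := Lnp hk (inL b hb).
    case: (boolP [exists i, k <= phi a i + phi b i]) => [/existsP //| /existsPn H].
    exfalso.
    have H' : forall i, phi a i + phi b i < k.
      by move=> i; have := H i; rewrite -ltnNge.
    case: ca => ca; case: cb => cb.
    * have [j hj] := iA a b ha hb.
      case: (ord_cases j) hj => [->|[i ->]] hj; last first.
      -- have := H' i; rw ca cb hk; lia.
      -- rewrite ca cb in hj; lia.
    * have hne : a != b by apply/eqP => e; rewrite e in ca; lia.
      have := aA a b ha hb hne; apply/negP/negPn.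
      apply: le0; first by rewrite ca.
      move=> i; have := H' i; rw ca cb hk.
      have := bd _ b (lift ord0 i); lia.
    * have hne : b != a by apply/eqP => e; rewrite -e in ca; lia.
      have := aA b a hb ha hne; apply/negP/negPn.
      apply: le0; first by rewrite cb.
      move=> i; have := H' i; rw ca cb hk.
      have := bd _ a (lift ord0 i); lia.
    * have S : m * (k - 1) <= \sum_(i < m) (a (lift ord0 i) : nat)
                              + \sum_(i < m) (b (lift ord0 i) : nat).
        apply: sum_lb => i; have := H' i; rw ca cb hk.
        have := bd _ a (lift ord0 i); have := bd _ b (lift ord0 i); lia.
      have := sa ca; have := wb; rewrite !wsplit ca cb. nia.
  + apply: antI => x y /imE [a ha ->] /imE [b hb ->] hne.
    apply/negP => /vleP hle.
    have hab : a != b by apply: contraNneq hne => ->.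
    have [ca wa sa] := Lnp hk (inL a ha).
    have [cb wb sb] := Lnp hk (inL b hb).
    case: ca => ca; case: cb => cb.
    * have := aA a b ha hb hab; apply/negP/negPn.
      apply: le0; first by rewrite ca cb.
      by move=> i; have := hle i; rewrite !phiE0.
    * have [j hj] := iA a b ha hb.
      case: (ord_cases j) hj => [->|[i ->]] hj; last first.
      -- have := hle i; rw ca cb hk; have := bd _ b (lift ord0 i); lia.
      -- rewrite ca cb in hj; lia.
    * have S : m * (k - 1) <= \sum_(i < m) (a (lift ord0 i) : nat)
                              + \sum_(i < m) (b (lift ord0 i) : nat).
        apply: sum_lb => i; have := hle i; rw ca cb hk.
        have := bd _ a (lift ord0 i); lia.
      have := keyw hk (inL a ha) (inL b hb) ca; rewrite !wsplit ca cb. nia.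
    * have hba : b != a by rewrite eq_sym.
      have := aA b a hb ha hba; apply/negP/negPn.
      apply: le0; first by rewrite ca cb.
      move=> i; have := hle i; rw ca cb hk.
      have := bd _ a (lift ord0 i); have := bd _ b (lift ord0 i); lia.
- move=> B /intE iB /antE aB.
  split.
  + apply: intI => a b; rewrite !inE => /andP [ha pa] /andP [hb pb].
    have [ca wa sa] := Lnp hk ha.
    have [cb wb sb] := Lnp hk hb.
    case: (boolP [exists i, k <= a i + b i]) => [/existsP //| /existsPn H].
    exfalso.
    have H' : forall i, a i + b i < k.
      by move=> i; have := H i; rewrite -ltnNge.
    case: ca => ca; case: cb => cb.
    * have [i hi] := iB _ _ pa pb.
      have := H' (lift ord0 i); move: hi; rw ca cb hk; lia.
    * have hl : vle (phi a) (phi b).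
        apply/vleP => i; have := H' (lift ord0 i); rw ca cb hk; lia.
      case: (eqVneq (phi a) (phi b)) => e; last by move: (aB _ _ pa pb e); rewrite hl.
      have S : m * (k - 1) <= \sum_(i < m) (b (lift ord0 i) : nat)
                              + \sum_(i < m) (a (lift ord0 i) : nat).
        apply: sum_lb => i.
        have := congr1 (fun f : vec k m => (f i : nat)) e => /=.
        rw ca cb hk. have := bd _ b (lift ord0 i); lia.
      have := keyw hk hb ha cb; rewrite !wsplit ca cb. nia.
    * have hl : vle (phi b) (phi a).
        apply/vleP => i; have := H' (lift ord0 i); rw ca cb hk; lia.
      case: (eqVneq (phi b) (phi a)) => e; last by move: (aB _ _ pb pa e); rewrite hl.
      have S : m * (k - 1) <= \sum_(i < m) (a (lift ord0 i) : nat)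
                              + \sum_(i < m) (b (lift ord0 i) : nat).
        apply: sum_lb => i.
        have := congr1 (fun f : vec k m => (f i : nat)) e => /=.
        rw ca cb hk. have := bd _ a (lift ord0 i); lia.
      have := keyw hk ha hb ca; rewrite !wsplit ca cb. nia.
    * have := H' ord0; rewrite ca cb; lia.
  + apply: antI => a b; rewrite !inE => /andP [ha pa] /andP [hb pb] hne.
    apply/negP => /vleP hle.
    have [ca wa sa] := Lnp hk ha.
    have [cb wb sb] := Lnp hk hb.
    case: ca => ca; case: cb => cb.
    * have hp : phi a != phi b.
        apply: contraNneq hne => e; apply/eqP; apply: ext0; first by rewrite ca cb.
        move=> i; have := congr1 (fun f : vec k m => (f i : nat)) e => /=.
        by rewrite !phiE0.
      have := aB _ _ pa pb hp; apply/negP/negPn; apply/vleP => i.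
      by rewrite !phiE0.
    * have [i hi] := iB _ _ pa pb.
      have := hle (lift ord0 i); move: hi; rw ca cb hk; have := bd _ b (lift ord0 i); lia.
    * have := hle ord0; rewrite ca cb; lia.
    * have hp : phi b != phi a.
        apply: contraNneq hne => e; apply/eqP; apply: ext0; first by rewrite ca cb.
        move=> i; have := congr1 (fun f : vec k m => (f i : nat)) e => /=.
        rw ca cb hk. have := bd _ a (lift ord0 i); have := bd _ b (lift ord0 i); lia.
      have := aB _ _ pb pa hp; apply/negP/negPn; apply/vleP => i.
      rw ca cb hk. have := hle (lift ord0 i); lia.
Qed.
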